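(* As $n\to\infty$, $$E(n)=2^{n+1}\left(\frac1n-\frac{3}{n^2}+O\!\left(\frac1{n^3}\right)\right),$$ where $E(n)=(-1)^n n!\{R_n(2)-R_n(1)R_{n-1}(1)\}$ with $R_n(x)=\sum_{k=0}^n (-x)^k/k!$.
   Context: $E(n)$ is the optimal value of the linear programming relaxation (variables $x_u\in[0,1]$, $u\in\mathbb{F}_2^n$) of the problem of minimizing $\sum_u x_u$ subject to $x_v+\sum_{u\supset v,\ \mathrm{dist}(u,v)=1}x_u\ge1$ for all $v\in\mathbb{F}_2^n$; it equals the stated closed form. *)

(* Defs.v *)
From Stdlib Require Import Reals Arith Factorial.
Open Scope R_scope.

Definition Rpoly (n : nat) (x : R) : R :=
  sum_f_R0 (fun k => (- x) ^ k / INR (fact k)) n.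

(* E(n) = (-1)^n n! (R_n(2) - R_n(1) R_{n-1}(1)).  For n = 0 the index n-1 is
   truncated to 0; irrelevant for the asymptotic statement (n >= 1). *)
Definition E (n : nat) : R :=
  (-1) ^ n * INR (fact n) * (Rpoly n 2 - Rpoly n 1 * Rpoly (n - 1) 1).

(* Main.v *)
Require Import Defs.
From Stdlib Require Import Reals.
Open Scope R_scope.
From Stdlib Require Import Lra Lia Psatz Arith Factorial.

Lemma Rpoly_S n x : Rpoly (S n) x = Rpoly n x + (-x)^(S n) / INR (fact (S n)).
Proof. reflexivity. Qed.

Lemma fact_pos k : 0 < INR (fact k).
Proof. apply lt_0_INR, lt_O_fact. Qed.

Lemma term_abs x k : 0 <= x -> Rabs ((-x)^k / INR (fact k)) = x^k / INR (fact k).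
Proof.
  intros Hx. unfold Rdiv. rewrite Rabs_mult, <- RPow_abs, Rabs_Ropp, Rabs_pos_eq by lra.
  rewrite Rabs_pos_eq; [reflexivity|]. left; apply Rinv_0_lt_compat, fact_pos.
Qed.

Lemma ratio x k : 0 <= x <= 2 -> (3 <= k)%nat ->
  x^(S k) / INR (fact (S k)) <= (x^k / INR (fact k)) / 2.
Proof.
  intros Hx Hk. rewrite fact_simpl, mult_INR. simpl pow.
  assert (Hf := fact_pos k). assert (Hp : 0 <= x^k) by (apply pow_le; lra).
  assert (HS : 4 <= INR (S k)) by (replace 4 with (INR 4) by (simpl; lra); apply le_INR; lia).
  replace (x * x ^ k / (INR (S k) * INR (fact k))) with ((x ^ k * / INR (fact k)) * (x / INR (S k))) by (field; lra).
  assert (0 <= x^k * / INR (fact k)) by (apply Rmult_le_pos; [lra| left; apply Rinv_0_lt_compat; lra]).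
  assert (x / INR (S k) <= /2).
  { apply Rmult_le_reg_r with (INR (S k)); [lra|]. unfold Rdiv. rewrite Rmult_assoc, Rinv_l by lra. lra. }
  nra.
Qed.

Lemma tail_fin x n : 0 <= x <= 2 -> (2 <= n)%nat -> forall m,
  Rabs (Rpoly (n + S m) x - Rpoly n x) + x^(n + S m) / INR (fact (n + S m))
    <= 2 * (x^(n+1) / INR (fact (n+1))).
Proof.
  intros Hx Hn. induction m.
  - rewrite Nat.add_1_r, Rpoly_S. replace (Rpoly n x + (- x) ^ S n / INR (fact (S n)) - Rpoly n x)
      with ((- x) ^ S n / INR (fact (S n))) by ring. rewrite term_abs by lra. lra.
  - replace (n + S (S m))%nat with (S (n + S m)) by lia. rewrite Rpoly_S.
    replace (Rpoly (n + S m) x + (- x) ^ S (n + S m) / INR (fact (S (n + S m))) - Rpoly n x)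
      with ((Rpoly (n + S m) x - Rpoly n x) + (- x) ^ S (n + S m) / INR (fact (S (n + S m)))) by ring.
    eapply Rle_trans; [|exact IHm].
    eapply Rle_trans. { apply Rplus_le_compat_r. apply Rabs_triang. }
    rewrite term_abs by lra.
    assert (H := ratio x (n + S m) Hx ltac:(lia)). lra.
Qed.

Lemma Rpoly_cv x : Un_cv (fun N => Rpoly N x) (exp (- x)).
Proof.
  assert (H := E1_cvg (- x)). intros eps He. destruct (H eps He) as [N HN].
  exists N. intros k Hk. specialize (HN k Hk). unfold E1 in HN. unfold Rpoly.
  replace (sum_f_R0 (fun k0 : nat => (- x) ^ k0 / INR (fact k0)) k)
    with (sum_f_R0 (fun k0 : nat => / INR (fact k0) * (- x) ^ k0) k); [exact HN|].
  apply sum_eq. intros; unfold Rdiv; ring.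
Qed.

Lemma tail x n : 0 <= x <= 2 -> (2 <= n)%nat ->
  Rabs (exp (- x) - Rpoly n x) <= 2 * (x^(n+1) / INR (fact (n+1))).
Proof.
  intros Hx Hn. apply Rle_plus_epsilon. intros eps He.
  destruct (Rpoly_cv x eps He) as [N HN].
  specialize (HN (N + S n)%nat ltac:(lia)). unfold Rdist in HN.
  assert (H := tail_fin x n Hx Hn N).
  replace (n + S N)%nat with (N + S n)%nat in H by lia.
  assert (0 <= x ^ (N + S n) / INR (fact (N + S n))).
  { unfold Rdiv; apply Rmult_le_pos; [apply pow_le; lra| left; apply Rinv_0_lt_compat, fact_pos]. }
  replace (exp (- x) - Rpoly n x) with ((Rpoly (N + S n) x - Rpoly n x) - (Rpoly (N + S n) x - exp (-x))) by ring.
  eapply Rle_trans; [apply Rabs_triang|]. rewrite Rabs_Ropp. lra.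
Qed.
Lemma div_le a b c d : 0 < b -> 0 < d -> a * d <= c * b -> a / b <= c / d.
Proof.
  intros Hb Hd H. apply Rmult_le_reg_r with (b*d); [nra|].
  replace (a / b * (b * d)) with (a * d) by (field; lra).
  replace (c / d * (b * d)) with (c * b) by (field; lra). lra.
Qed.

Lemma Rabs_lb a b : Rabs a <= b -> - b <= a <= b.
Proof. intros H. pose proof (Rle_abs a). pose proof (Rle_abs (-a)). rewrite Rabs_Ropp in *. lra. Qed.

Lemma final (n p f e1 s T2 A B : R) :
  12 <= n -> n^3 <= p -> 1 <= f -> 0 <= e1 <= 1 -> (s = 1 \/ s = -1) ->
  Rabs T2 <= 2 * (16 * p / ((n+3)*(n+2)*(n+1)*n*f)) ->
  Rabs A <= 2 * (1 / ((n+1)*n*f)) -> Rabs B <= 2 * (1 / (n*f)) ->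
  Rabs ((- s) * (n * f) * ((e1*e1 - T2 - s*(4*p)/((n+1)*n*f) + s*(8*p)/((n+2)*(n+1)*n*f))
          - (e1 - A)*(e1 - B)) / (4 * p) - (1/n - 3/n^2)) <= 100 / n^3.
Proof.
  intros Hn Hp Hf He Hs HT HA HB.
  assert (Hp0 : 0 < p) by nra.
  set (X1 := n*f*T2). set (X2 := n*f*A). set (X3 := n*f*B).
  assert (HX1 : Rabs X1 <= 32 * p / ((n+3)*(n+2)*(n+1))).
  { unfold X1. rewrite Rabs_mult, (Rabs_pos_eq (n*f)) by nra.
    apply Rle_trans with (n*f*(2 * (16 * p / ((n + 3) * (n + 2) * (n + 1) * n * f)))).
    - apply Rmult_le_compat_l; [nra|exact HT].
    - right. field. nra. }
  assert (HX2 : Rabs X2 <= 1).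
  { unfold X2. rewrite Rabs_mult, (Rabs_pos_eq (n*f)) by nra.
    apply Rle_trans with (n*f*(2 * (1 / ((n + 1) * n * f)))).
    - apply Rmult_le_compat_l; [nra|exact HA].
    - replace (n * f * (2 * (1 / ((n + 1) * n * f)))) with (2/(n+1)) by (field; nra).
      apply Rle_trans with (2/13); [apply div_le; lra|lra]. }
  assert (HX3 : Rabs X3 <= 2).
  { unfold X3. rewrite Rabs_mult, (Rabs_pos_eq (n*f)) by nra.
    apply Rle_trans with (n*f*(2 * (1 / (n * f)))).
    - apply Rmult_le_compat_l; [nra|exact HB].
    - right. field. nra. }
  assert (HA1 : Rabs A <= 1).
  { eapply Rle_trans; [exact HA|].
    replace (2 * (1 / ((n + 1) * n * f))) with (2 / ((n + 1) * n * f)) by (field; nra).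
    apply Rle_trans with (1/1); [apply div_le; nra|lra]. }
  set (err := X1 - (e1*X2 + e1*X3 - A*X3)).
  assert (Herr : Rabs err <= Rabs X1 + 5).
  { unfold err. apply Rabs_le. pose proof (Rabs_lb _ _ HX1).
    pose proof (Rabs_lb _ _ HX2). pose proof (Rabs_lb _ _ HX3).
    pose proof (Rabs_lb _ _ HA1). pose proof (Rabs_pos X1).
    destruct (Rle_dec 0 X1); [rewrite (Rabs_pos_eq X1) by lra| rewrite (Rabs_left X1) by lra];
    split; nra. }
  assert (Heq : (- s) * (n * f) * ((e1*e1 - T2 - s*(4*p)/((n+1)*n*f) + s*(8*p)/((n+2)*(n+1)*n*f))
          - (e1 - A)*(e1 - B)) / (4 * p) - (1/n - 3/n^2)
        = (7*n+6)/(n^2*(n+1)*(n+2)) + s * err / (4*p)).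
  { unfold err, X1, X2, X3. destruct Hs; subst s; field; nra. }
  rewrite Heq. eapply Rle_trans; [apply Rabs_triang|].
  assert (H1 : Rabs ((7*n+6)/(n^2*(n+1)*(n+2))) <= 7 / n^3).
  { rewrite Rabs_pos_eq.
    - apply div_le; nra.
    - apply Rlt_le, Rdiv_lt_0_compat; nra. }
  assert (H2 : Rabs (s * err / (4*p)) <= 10 / n^3).
  { unfold Rdiv. rewrite !Rabs_mult, Rabs_inv, (Rabs_pos_eq (4*p)) by lra.
    assert (Rabs s = 1) by (destruct Hs; subst; unfold Rabs; destruct Rcase_abs; lra).
    rewrite H. rewrite Rmult_1_l.
    apply Rle_trans with ((Rabs X1 + 5) * / (4*p)).
    { apply Rmult_le_compat_r; [left; apply Rinv_0_lt_compat; lra| exact Herr]. }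
    apply Rle_trans with ((32 * p / ((n+3)*(n+2)*(n+1)) + 5) * / (4*p)).
    { apply Rmult_le_compat_r; [left; apply Rinv_0_lt_compat; lra| lra]. }
    replace ((32 * p / ((n+3)*(n+2)*(n+1)) + 5) * / (4*p))
      with (8 / ((n+3)*(n+2)*(n+1)) + 5 / (4*p)) by (field; nra).
    assert (8 / ((n+3)*(n+2)*(n+1)) <= 8 / n^3) by (apply div_le; nra).
    assert (5 / (4*p) <= 2 / n^3) by (apply div_le; nra).
    lra. }
  assert (0 < n^3) by nra.
  replace (100 / n^3) with (7/n^3 + 10/n^3 + 83/n^3) by (field; lra).
  assert (0 <= 83 / n^3) by (apply Rlt_le, Rdiv_lt_0_compat; lra).
  lra.
Qed.

Lemma pow2_cube m : (11 <= m)%nat -> ((m+1)^3 <= 2^m)%nat.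
Proof.
  induction 1.
  - simpl. lia.
  - rewrite (Nat.pow_succ_r' 2 m).
    assert ((S m + 1)^3 <= 2 * (m+1)^3)%nat.
    { replace (S m + 1)%nat with (m+2)%nat by lia. simpl.
      assert (11 * 11 <= m * m)%nat by nia. assert (121 * m <= m*m*m)%nat by nia. nia. }
    lia.
Qed.

Lemma sign m : (-1)^m = 1 \/ (-1)^m = -1.
Proof. induction m; simpl; [left; reflexivity|]. destruct IHm as [-> | ->]; [right|left]; ring. Qed.

Theorem corollary1 :
  exists (C : R) (N : nat), (1 <= N)%nat /\
    forall n : nat, (N <= n)%nat ->
      Rabs (E n / 2 ^ (n + 1) - (1 / INR n - 3 / INR n ^ 2)) <= C / INR n ^ 3.
Proof.
  exists 100, 12%nat. split; [lia|]. intros [|m] Hm; [lia|].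
  set (n := INR (S m)). set (f := INR (fact m)). set (p := 2^m). set (s := (-1)^m).
  set (e1 := exp (Ropp 1)).
  set (T2 := exp (Ropp 2) - Rpoly (m+3) 2).
  set (A := exp (Ropp 1) - Rpoly (S m) 1).
  set (B := exp (Ropp 1) - Rpoly m 1).
  assert (Hn : 12 <= n).
  { unfold n. replace 12 with (INR 12) by (simpl; lra). apply le_INR; lia. }
  assert (Hp : n^3 <= p).
  { unfold n, p. replace 2 with (INR 2) by (simpl; lra). rewrite <- !pow_INR. apply le_INR.
    replace (S m) with (m+1)%nat by lia. apply pow2_cube. lia. }
  assert (Hf : 1 <= f).
  { unfold f. replace 1 with (INR 1) by reflexivity. apply le_INR. apply lt_O_fact. }
  assert (Hf1 : INR (fact (S m)) = n * f) by (unfold n, f; rewrite fact_simpl, mult_INR; reflexivity).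
  assert (Hf2 : INR (fact (m+2)) = (n+1)*n*f).
  { replace (m+2)%nat with (S (S m)) by lia. rewrite fact_simpl, mult_INR, Hf1, S_INR. fold n. ring. }
  assert (Hf3 : INR (fact (m+3)) = (n+2)*(n+1)*n*f).
  { replace (m+3)%nat with (S (m+2)) by lia. rewrite fact_simpl, mult_INR, Hf2.
    replace (S (m+2)) with (S (S (S m))) by lia. unfold n; rewrite !S_INR; ring. }
  assert (Hf4 : INR (fact (m+3+1)) = (n+3)*(n+2)*(n+1)*n*f).
  { replace (m+3+1)%nat with (S (m+3)) by lia. rewrite fact_simpl, mult_INR, Hf3.
    replace (S (m+3)) with (S (S (S (S m)))) by lia. unfold n; rewrite !S_INR; ring. }
  assert (He1 : 0 <= e1 <= 1).
  { split; [left; apply exp_pos|].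
    assert (H := tail 1 2 ltac:(lra) ltac:(lia)).
    assert (Rpoly 2 1 = 1/2) by (unfold Rpoly; simpl; field).
    rewrite H0 in H. replace (1 ^ (2+1) / INR (fact (2+1))) with (1/6) in H by (simpl; field). fold e1 in H.
    apply Rabs_lb in H. lra. }
  assert (Hs : s = 1 \/ s = -1) by apply sign.
  assert (HT : Rabs T2 <= 2 * (16 * p / ((n+3)*(n+2)*(n+1)*n*f))).
  { unfold T2. 
    eapply Rle_trans; [apply tail; lra || lia|]. rewrite Hf4.
    replace (2 ^ (m+3+1)) with (16 * p) by (unfold p; rewrite !pow_add; simpl; ring). lra. }
  assert (HA : Rabs A <= 2 * (1 / ((n+1)*n*f))).
  { unfold A. eapply Rle_trans; [apply tail; lra || lia|].
    replace (S m + 1)%nat with (m+2)%nat by lia. rewrite Hf2, pow1. lra. }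
  assert (HB : Rabs B <= 2 * (1 / (n*f))).
  { unfold B. eapply Rle_trans; [apply tail; lra || lia|].
    replace (m + 1)%nat with (S m) by lia. rewrite Hf1, pow1. lra. }
  assert (HR2 : Rpoly (S m) 2 = e1*e1 - T2 - s*(4*p)/((n+1)*n*f) + s*(8*p)/((n+2)*(n+1)*n*f)).
  { unfold T2, e1.
    replace (exp (Ropp 2)) with (exp (Ropp 1) * exp (Ropp 1)) by (rewrite <- exp_plus; f_equal; ring).
    replace (m+3)%nat with (S (S (S m))) by lia. rewrite !Rpoly_S.
    replace (S (S m)) with (m+2)%nat by lia. replace (S (m+2)) with (m+3)%nat by lia.
    rewrite Hf2, Hf3.
    replace ((Ropp 2)^(m+2)) with (s*(4*p)) by (unfold s, p; replace (Ropp 2) with ((-1)*2) by ring;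
      rewrite Rpow_mult_distr, !pow_add; simpl; ring).
    replace ((Ropp 2)^(m+3)) with (-(s*(8*p))) by (unfold s, p; replace (Ropp 2) with ((-1)*2) by ring;
      rewrite Rpow_mult_distr, !pow_add; simpl; ring).
    unfold Rdiv. ring. }
  unfold E. replace (S m - 1)%nat with m by lia.
  replace (Rpoly (S m) 1) with (e1 - A) by (unfold A, e1; ring).
  replace (Rpoly m 1) with (e1 - B) by (unfold B, e1; ring).
  rewrite HR2, Hf1.
  replace ((-1)^(S m)) with (- s) by (unfold s; simpl; ring).
  replace (2 ^ (S m + 1)) with (4 * p) by (unfold p; rewrite pow_add; simpl; ring).
  fold n. apply final; assumption.
Qed.
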